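(* Let $0\le\alpha<1$ and let $r_0=r_0(\alpha)$ be the real root in $(0,1)$ of the equation \[2\big(1-\alpha+2(2-\alpha)r\big)(1-r)^4=1-\alpha+4r+(1+\alpha)r^2.\] Let $\mathcal{F}$ be the class of analytic functions $f(z)=z+\sum_{n\ge2}a_nz^n$ on $\mathbb{D}$ with $a_2=0$ and $|a_n|\le n$ for all $n\ge3$. Then every $f\in\mathcal{F}$ satisfies $\left|\frac{zf''(z)}{f'(z)}\right|\le1-\alpha$ for $|z|\le r_0$; $r_0(\alpha)$ is the radius of convexity of order $\alpha$ of $\mathcal{F}$; and $r_0(1/2)\approx0.125429$ is the radius of uniform convexity of $\mathcal{F}$. All results are sharp (in particular $r_0$ in the first statement cannot be replaced by any larger number).
   Context: $\mathbb{D}=\{z\in\mathbb{C}:|z|<1\}$. For a class $\mathcal{F}$ of analytic functions on $\mathbb{D}$ normalized by $f(0)=0$, $f'(0)=1$, and $0\le\alpha<1$, the radius of convexity of order $\alpha$ of $\mathcal{F}$ is the supremum of $r\in(0,1]$ such that every $f\in\mathcal{F}$ satisfies $f'(z)\ne0$ and $\operatorname{Re}\big(1+zf''(z)/f'(z)\big)>\alpha$ for $|z|<r$. The radius of uniform convexity of $\mathcal{F}$ is the supremum of $r\in(0,1]$ such that every $f\in\mathcal{F}$ satisfies $f'(z)\ne0$ and $\operatorname{Re}\big(1+zf''(z)/f'(z)\big)>\left|zf''(z)/f'(z)\right|$ for $|z|<r$. *)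

(* Defs.v *)
From Stdlib Require Import Reals.
From Coquelicot Require Import Coquelicot.
Open Scope R_scope.

(* Sum of a complex series, computed componentwise
   (meaningful when the series converges). *)
Definition csum (u : nat -> C) : C :=
  (Series (fun n => Re (u n)), Series (fun n => Im (u n))).

Definition cpow (z : C) (n : nat) : C := pow_n (K := C_Ring) z n.

(* An analytic function f(z) = sum_n a_n z^n on the unit disk is represented
   by its Taylor coefficient sequence a. *)
Definition fval (a : nat -> C) (z : C) : C :=
  csum (fun n => Cmult (a n) (cpow z n)).

Definition fder1 (a : nat -> C) (z : C) : C :=
  csum (fun n => Cmult (RtoC (INR (n + 1))) (Cmult (a (n + 1)%nat) (cpow z n))).

Definition fder2 (a : nat -> C) (z : C) : C :=
  csum (fun n => Cmult (RtoC (INR ((n + 2) * (n + 1))))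
                       (Cmult (a (n + 2)%nat) (cpow z n))).

Definition inF (a : nat -> C) : Prop :=
  a 0%nat = RtoC 0 /\ a 1%nat = RtoC 1 /\ a 2%nat = RtoC 0 /\
  forall n : nat, (3 <= n)%nat -> Cmod (a n) <= INR n.

Definition zf2f1 (a : nat -> C) (z : C) : C :=
  Cdiv (Cmult z (fder2 a z)) (fder1 a z).

Definition convex_order_radii (alpha : R) : R -> Prop :=
  fun r => 0 < r <= 1 /\
    forall a, inF a -> forall z : C, Cmod z < r ->
      fder1 a z <> RtoC 0 /\ Re (Cplus (RtoC 1) (zf2f1 a z)) > alpha.

Definition unif_convex_radii : R -> Prop :=
  fun r => 0 < r <= 1 /\
    forall a, inF a -> forall z : C, Cmod z < r ->
      fder1 a z <> RtoC 0 /\ Re (Cplus (RtoC 1) (zf2f1 a z)) > Cmod (zf2f1 a z).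

Definition r0_eq (alpha r : R) : Prop :=
  2 * (1 - alpha + 2 * (2 - alpha) * r) * (1 - r) ^ 4
  = 1 - alpha + 4 * r + (1 + alpha) * r ^ 2.

(* Main.v *)
Require Import Defs.
From Stdlib Require Import Reals Lra Psatz Lia.
From Coquelicot Require Import Coquelicot.
Open Scope R_scope.


Lemma lim_inv_n : is_lim_seq (fun n => / (INR n + 1)) 0.
Proof.
  assert (H : is_lim_seq (fun n => INR n + 1) p_infty).
  { apply is_lim_seq_ext with (fun n => INR (S n)). intro; apply S_INR.
    apply (is_lim_seq_incr_1 INR p_infty). apply is_lim_seq_INR. }
  apply (is_lim_seq_inv _ _ H). discriminate.
Qed.

Lemma lim_ratio k : is_lim_seq (fun n => (1 + / (INR n + 1)) ^ k) 1.
Proof.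
  induction k as [|k IH].
  - simpl. apply is_lim_seq_const.
  - simpl. pose proof (is_lim_seq_mult' _ _ _ _ (is_lim_seq_plus' _ _ _ _ (is_lim_seq_const 1) lim_inv_n) IH) as H.
    replace ((1+0)*1) with 1 in H by ring. exact H.
Qed.

Lemma ex_pw_pos k q : 0 < q < 1 -> ex_series (fun n => (INR n + 1)^k * q^n).
Proof.
  intros Hq. apply ex_series_Rabs.
  apply ex_series_DAlembert with q. lra.
  - intro n. apply Rmult_integral_contrapositive. split; apply pow_nonzero.
    pose proof (pos_INR n); lra. lra.
  - apply is_lim_seq_ext with (fun n => (1 + / (INR n + 1)) ^ k * q).
    + intro n. rewrite S_INR. pose proof (pos_INR n).
      assert (e: INR n + 1 + 1 = (1 + / (INR n + 1)) * (INR n + 1)) by (field; lra).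
      rewrite e, Rpow_mult_distr. replace (q ^ S n) with (q * q^n) by (simpl; ring).
      assert (Hx: (INR n + 1) ^ k <> 0) by (apply pow_nonzero; lra).
      assert (Hy: q ^ n <> 0) by (apply pow_nonzero; lra).
      replace ((1 + / (INR n + 1)) ^ k * (INR n + 1) ^ k * (q * q ^ n) / ((INR n + 1) ^ k * q ^ n)) with ((1 + / (INR n + 1)) ^ k * q) by (field; auto).
      rewrite Rabs_pos_eq; auto.
      apply Rmult_le_pos. apply pow_le. assert (0 <= / (INR n + 1)) by (apply Rlt_le, Rinv_0_lt_compat; lra). lra. lra.
    + pose proof (is_lim_seq_mult' _ _ _ _ (lim_ratio k) (is_lim_seq_const q)) as H.
      replace (1*q) with q in H by ring. exact H.
Qed.

Lemma ex_pw k r : 0 <= r < 1 -> ex_series (fun n => (INR n + 1)^k * r^n).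
Proof.
  intros Hr. apply (@ex_series_le R_AbsRing R_CompleteNormedModule _ (fun n => (INR n + 1)^k * ((1+r)/2)^n)).
  - intro n. change (Rabs ((INR n + 1)^k * r^n) <= (INR n + 1)^k * ((1+r)/2)^n).
    pose proof (pos_INR n).
    rewrite Rabs_pos_eq. apply Rmult_le_compat_l. apply pow_le; lra.
    apply pow_incr; lra. apply Rmult_le_pos; apply pow_le; lra.
  - apply ex_pw_pos. lra.
Qed.

Definition T k r := Series (fun n => (INR n + 1)^k * r^n).

Lemma Series_zero : Series (fun _ => 0) = 0.
Proof. rewrite <- (Series_ext (fun n => 0 * 0)). rewrite Series_scal_l. ring. intro; ring. Qed.

Lemma exR_plus a b : ex_series a -> ex_series b -> ex_series (fun n => a n + b n).
Proof. intros; apply (ex_series_plus a b); auto. Qed.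
Lemma exR_scal c a : ex_series a -> ex_series (fun n => c * a n).
Proof. intros; apply (ex_series_scal_l c a); auto. Qed.

Lemma T_rec k r : 0 <= r < 1 ->
  T k r = 1 + r * Series (fun n => (INR n + 1 + 1)^k * r^n).
Proof.
  intros Hr. unfold T. rewrite Series_incr_1 by (apply ex_pw; auto).
  rewrite <- Series_scal_l. rewrite Rplus_0_l, pow1, pow_O. f_equal. ring. apply Series_ext. intro n. rewrite S_INR. simpl. ring.
Qed.

Lemma lin4 r a b c d : 0 <= r < 1 ->
  Series (fun n => a * ((INR n + 1)^0 * r^n) + b * ((INR n + 1)^1 * r^n)
                 + c * ((INR n + 1)^2 * r^n) + d * ((INR n + 1)^3 * r^n))
  = a * T 0 r + b * T 1 r + c * T 2 r + d * T 3 r.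
Proof.
  intros Hr. unfold T.
  repeat rewrite Series_plus; repeat apply exR_plus; try apply exR_scal; try apply ex_pw; auto.
  rewrite !Series_scal_l. ring.
Qed.

Lemma T_closed r : 0 <= r < 1 ->
  T 0 r = 1 / (1 - r) /\ T 1 r = 1 / (1 - r)^2 /\
  T 2 r = (1 + r) / (1 - r)^3 /\ T 3 r = (1 + 4*r + r^2) / (1 - r)^4.
Proof.
  intros Hr.
  assert (h0 := T_rec 0 r Hr). assert (h1 := T_rec 1 r Hr).
  assert (h2 := T_rec 2 r Hr). assert (h3 := T_rec 3 r Hr).
  rewrite (Series_ext _ (fun n => 1 * ((INR n + 1)^0 * r^n) + 0 * ((INR n + 1)^1 * r^n)
                 + 0 * ((INR n + 1)^2 * r^n) + 0 * ((INR n + 1)^3 * r^n))) in h0 by (intro; simpl; ring).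
  rewrite (Series_ext _ (fun n => 1 * ((INR n + 1)^0 * r^n) + 1 * ((INR n + 1)^1 * r^n)
                 + 0 * ((INR n + 1)^2 * r^n) + 0 * ((INR n + 1)^3 * r^n))) in h1 by (intro; simpl; ring).
  rewrite (Series_ext _ (fun n => 1 * ((INR n + 1)^0 * r^n) + 2 * ((INR n + 1)^1 * r^n)
                 + 1 * ((INR n + 1)^2 * r^n) + 0 * ((INR n + 1)^3 * r^n))) in h2 by (intro; simpl; ring).
  rewrite (Series_ext _ (fun n => 1 * ((INR n + 1)^0 * r^n) + 3 * ((INR n + 1)^1 * r^n)
                 + 3 * ((INR n + 1)^2 * r^n) + 1 * ((INR n + 1)^3 * r^n))) in h3 by (intro; simpl; ring).
  rewrite lin4 in h0, h1, h2, h3 by auto.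
  assert (u : 1 - r <> 0) by lra.
  assert (sl : forall x y, (1 - r) * x = y -> x = y / (1 - r)).
  { intros x y H. rewrite <- H. field. auto. }
  assert (e0 : T 0 r = 1 / (1 - r)) by (apply sl; lra).
  assert (e1 : T 1 r = 1 / (1 - r)^2).
  { rewrite (sl (T 1 r) (1 + r * T 0 r)) by lra. rewrite e0. field. auto. }
  assert (e2 : T 2 r = (1 + r) / (1 - r)^3).
  { rewrite (sl (T 2 r) (1 + r * (T 0 r + 2 * T 1 r))) by lra. rewrite e0, e1. field. auto. }
  assert (e3 : T 3 r = (1 + 4*r + r^2) / (1 - r)^4).
  { rewrite (sl (T 3 r) (1 + r * (T 0 r + 3 * T 1 r + 3 * T 2 r))) by lra. rewrite e0, e1, e2. field. auto. }
  auto.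
Qed.


Lemma im_le_Cmod c : Rabs (Im c) <= Cmod c.
Proof.
  destruct c as [x y]. unfold Cmod; simpl. rewrite <- sqrt_Rsqr_abs. apply sqrt_le_1_alt.
  unfold Rsqr. nra.
Qed.

Lemma csum_ext u v : (forall n, u n = v n) -> csum u = csum v.
Proof. intro H. unfold csum. f_equal; apply Series_ext; intro n; rewrite H; auto. Qed.

Lemma csum_real x : csum (fun n => RtoC (x n)) = RtoC (Series x).
Proof. unfold csum, RtoC. simpl. rewrite Series_zero. auto. Qed.

Lemma cpow_R s n : cpow (RtoC s) n = RtoC (s ^ n).
Proof.
  induction n as [|n IH]. reflexivity.
  unfold cpow in *. simpl pow_n. rewrite IH. change (mult (RtoC s) (RtoC (s^n)) = RtoC (s * s^n)).
  rewrite RtoC_mult. reflexivity.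
Qed.

Lemma Cmod_cpow z n : Cmod (cpow z n) = Cmod z ^ n.
Proof.
  induction n as [|n IH]. simpl. apply Cmod_1.
  unfold cpow in *. simpl pow_n. change (Cmod (Cmult z (pow_n (K:=C_Ring) z n)) = Cmod z ^ S n).
  rewrite Cmod_mult, IH. reflexivity.
Qed.

Lemma ex_Re u c : (forall n, Cmod (u n) <= c n) -> ex_series c -> ex_series (fun n => Re (u n)).
Proof.
  intros H Hc. apply (@ex_series_le R_AbsRing R_CompleteNormedModule _ c); auto.
  intro n. change (Rabs (Re (u n)) <= c n). eapply Rle_trans. apply re_le_Cmod. auto.
Qed.
Lemma ex_Im u c : (forall n, Cmod (u n) <= c n) -> ex_series c -> ex_series (fun n => Im (u n)).
Proof.
  intros H Hc. apply (@ex_series_le R_AbsRing R_CompleteNormedModule _ c); auto.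
  intro n. change (Rabs (Im (u n)) <= c n). eapply Rle_trans. apply im_le_Cmod. auto.
Qed.

Lemma exR_S (c : nat -> R) : ex_series c -> ex_series (fun n => c (S n)).
Proof. intro H. apply (ex_series_incr_1 c) in H. auto. Qed.

Lemma csum_incr1 u c : (forall n, Cmod (u n) <= c n) -> ex_series c ->
  csum u = Cplus (u 0%nat) (csum (fun n => u (S n))).
Proof.
  intros H Hc. unfold csum.
  rewrite (Series_incr_1 (fun n => Re (u n))) by (eapply ex_Re; eauto).
  rewrite (Series_incr_1 (fun n => Im (u n))) by (eapply ex_Im; eauto).
  destruct (u 0%nat). reflexivity.
Qed.

Lemma Series_nonneg c : (forall n, 0 <= c n) -> ex_series c -> 0 <= Series c.
Proof. intros H Hc. rewrite <- Series_zero. apply Series_le; auto. intro n; split; auto; lra. Qed.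

Lemma csum_bound u c : (forall n, Cmod (u n) <= c n) -> ex_series c -> Cmod (csum u) <= Series c.
Proof.
  intros H Hc.
  assert (Hc0 : forall n, 0 <= c n) by (intro n; eapply Rle_trans; [apply Cmod_ge_0|apply H]).
  set (A := Series (fun n => Re (u n))). set (B := Series (fun n => Im (u n))).
  assert (eA := ex_Re u c H Hc). assert (eB := ex_Im u c H Hc).
  destruct (Req_dec (Cmod (csum u)) 0) as [E|E].
  { rewrite E. apply Series_nonneg; auto. }
  set (m := Cmod (csum u)). assert (Hm : 0 < m) by (pose proof (Cmod_ge_0 (csum u)); unfold m in *; lra).
  assert (Hm2 : m ^ 2 = A^2 + B^2) by (unfold m; rewrite Cmod2_alt; reflexivity).
  assert (key : Series (fun n => (A * Re (u n) + B * Im (u n)) / m) = m).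
  { unfold Rdiv. rewrite (Series_ext _ (fun n => (/ m) * (A * Re (u n) + B * Im (u n)))) by (intro; ring).
    rewrite Series_scal_l, Series_plus by (apply exR_scal; auto).
    rewrite !Series_scal_l. fold A B. field_simplify; [|lra]. rewrite <- Hm2. field. lra. }
  rewrite <- key.
  assert (ex_series (fun n => (A * Re (u n) + B * Im (u n)) / m)).
  { unfold Rdiv. refine (ex_series_ext (fun n => (/ m) * (A * Re (u n) + B * Im (u n))) _ _ _).
    intro n; simpl; ring.
    apply exR_scal, exR_plus; apply exR_scal; auto. }
  assert (0 <= Series c - Series (fun n => (A * Re (u n) + B * Im (u n)) / m)); [|lra].
  rewrite <- Series_minus by auto. apply Series_nonneg.
  - intro n. assert ((A * Re (u n) + B * Im (u n)) <= m * c n); [|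
      apply Rge_le, Rge_minus, Rle_ge; apply (Rmult_le_reg_l m); auto; unfold Rdiv; rewrite <- Rmult_assoc, (Rmult_comm m), Rmult_assoc, Rinv_r, Rmult_1_r; lra].
    destruct (u n) as [x y] eqn:Eu. simpl.
    assert (Hcs : Cmod (x, y) <= c n) by (rewrite <- Eu; auto).
    assert (Rabs (A * x + B * y) <= m * Cmod (x,y)).
    { assert (0 <= Cmod (x,y)) by apply Cmod_ge_0.
      rewrite <- (Rabs_pos_eq (m * Cmod (x,y))) by nra.
      apply Rsqr_le_abs_0. rewrite Rsqr_mult. unfold Rsqr.
      assert (Cmod (x,y) * Cmod (x,y) = x^2 + y^2) by (replace (x^2+y^2) with (Cmod (x,y) ^ 2) by (rewrite Cmod2_alt; reflexivity); ring).
      assert (m * m = A^2 + B^2) by (rewrite <- Hm2; ring).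
      rewrite H2, H3. pose proof (pow2_ge_0 (A*y - B*x)). nra. }
    pose proof (Rle_abs (A * x + B * y)). nra.
  - apply (@ex_series_minus R_AbsRing R_NormedModule c); auto.
Qed.


Definition Dc r := 2 + 4*r - (1+r)/(1-r)^3.
Definition Nc r := (4*r + 2*r^2)/(1-r)^4 - 4*r.

Lemma inF_bound a n : inF a -> (1 <= n)%nat -> Cmod (a n) <= INR n.
Proof.
  intros [h0 [h1 [h2 h3]]] Hn.
  destruct n as [|[|[|n]]]. lia.
  rewrite h1, Cmod_R, Rabs_R1. simpl; lra.
  rewrite h2, Cmod_R, Rabs_R0. simpl; lra.
  apply h3. lia.
Qed.

Lemma Cmod_1plus w : Cmod (Cplus (RtoC 1) w) >= 1 - Cmod w.
Proof.
  assert (e : RtoC 1 = Cplus (Cplus (RtoC 1) w) (Copp w)) by ring.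
  pose proof (Cmod_triangle (Cplus (RtoC 1) w) (Copp w)). rewrite <- e, Cmod_opp, Cmod_1 in H. lra.
Qed.

Lemma Cmod_term x w z n : 0 <= x -> Cmod (Cmult (RtoC x) (Cmult w (cpow z n))) = x * Cmod w * Cmod z ^ n.
Proof. intro. rewrite !Cmod_mult, Cmod_R, Rabs_pos_eq, Cmod_cpow by auto. ring. Qed.

Lemma fder1_bound a z : inF a -> Cmod z < 1 -> Cmod (fder1 a z) >= Dc (Cmod z).
Proof.
  intros Ha Hz. set (r := Cmod z). assert (Hr : 0 <= r < 1) by (split; [apply Cmod_ge_0| auto]).
  set (U := fun n => Cmult (RtoC (INR (n + 1))) (Cmult (a (n + 1)%nat) (cpow z n))).
  set (c := fun n => (INR n + 1)^2 * r^n).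
  assert (Hc : ex_series c) by (apply ex_pw; auto).
  assert (HU : forall n, Cmod (U n) <= c n).
  { intro n. unfold U, c. rewrite Cmod_term by apply pos_INR. rewrite plus_INR. simpl INR at 1 2.
    pose proof (inF_bound a (n+1) Ha ltac:(lia)). rewrite plus_INR in H. simpl INR in H.
    assert (0 <= r ^ n) by (apply pow_le; lra). pose proof (pos_INR n).
    assert (0 <= Cmod (a (n+1)%nat)) by apply Cmod_ge_0. fold r. 
    replace ((INR n + 1)^2 * r^n) with ((INR n + 1) * (INR n + 1) * r^n) by ring.
    apply Rmult_le_compat_r; auto. apply Rmult_le_compat_l; lra. }
  assert (HU1 : forall n, Cmod (U (S n)) <= c (S n)) by (intro; apply HU).
  assert (HU2 : forall n, Cmod (U (S (S n))) <= c (S (S n))) by (intro; apply HU).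
  assert (Hc1 := exR_S c Hc). assert (Hc2 := exR_S _ Hc1).
  unfold fder1. fold U.
  rewrite (csum_incr1 U c HU Hc), (csum_incr1 _ _ HU1 Hc1).
  destruct Ha as [h0 [h1 [h2 h3]]].
  assert (e0 : U 0%nat = RtoC 1).
  { unfold U. simpl. rewrite h1. change (pow_n z 0) with (@one C_Ring). change (@one C_Ring) with (RtoC 1). ring. }
  assert (e1 : U 1%nat = RtoC 0).
  { unfold U. simpl. rewrite h2. ring. }
  rewrite e0, e1.
  pose proof (Cmod_1plus (Cplus (RtoC 0) (csum (fun n => U (S (S n)))))).
  pose proof (csum_bound _ _ HU2 Hc2).
  rewrite Cplus_0_l in H.
  assert (Series (fun n => c (S (S n))) = T 2 r - 1 - 4 * r).
  { change (T 2 r) with (Series c). rewrite (Series_incr_1 _ Hc), (Series_incr_1 _ Hc1). unfold c. simpl. ring. }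
  destruct (T_closed r Hr) as [_ [_ [e2 _]]].
  unfold Dc. fold r. rewrite e2 in H1. rewrite Cplus_0_l. lra.
Qed.

Lemma fder2_bound a z : inF a -> Cmod z < 1 -> Cmod (Cmult z (fder2 a z)) <= Nc (Cmod z).
Proof.
  intros Ha Hz. set (r := Cmod z). assert (Hr : 0 <= r < 1) by (split; [apply Cmod_ge_0| auto]).
  set (V := fun n => Cmult (RtoC (INR ((n + 2) * (n + 1)))) (Cmult (a (n + 2)%nat) (cpow z n))).
  set (d := fun n => (INR n + 2) * (INR n + 1) * (INR n + 2) * r^n).
  assert (Hd : ex_series d).
  { refine (ex_series_ext (fun n => 0 * ((INR n + 1)^0 * r^n) + 1 * ((INR n + 1)^1 * r^n)
                 + 2 * ((INR n + 1)^2 * r^n) + 1 * ((INR n + 1)^3 * r^n)) _ _ _).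
    intro n; unfold d; simpl; ring.
    repeat apply exR_plus; apply exR_scal; apply ex_pw; auto. }
  assert (HV : forall n, Cmod (V n) <= d n).
  { intro n. unfold V, d. rewrite Cmod_term by apply pos_INR.
    rewrite mult_INR, !plus_INR. simpl INR at 1 2 3 4.
    pose proof (inF_bound a (n+2) Ha ltac:(lia)). rewrite plus_INR in H. simpl INR in H.
    assert (0 <= r ^ n) by (apply pow_le; lra). pose proof (pos_INR n).
    assert (0 <= Cmod (a (n+2)%nat)) by apply Cmod_ge_0. fold r.
    apply Rmult_le_compat_r; auto. apply Rmult_le_compat_l; nra. }
  assert (HV1 : forall n, Cmod (V (S n)) <= d (S n)) by (intro; apply HV).
  assert (Hd1 := exR_S d Hd).
  unfold fder2. fold V.
  rewrite (csum_incr1 V d HV Hd).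
  destruct Ha as [h0 [h1 [h2 h3]]].
  assert (e0 : V 0%nat = RtoC 0).
  { unfold V. simpl. rewrite h2. ring. }
  rewrite e0, Cplus_0_l, Cmod_mult. fold r.
  pose proof (csum_bound _ _ HV1 Hd1).
  assert (Series (fun n => d (S n)) = T 1 r + 2 * T 2 r + T 3 r - 4).
  { assert (Series d = T 1 r + 2 * T 2 r + T 3 r).
    { replace (T 1 r + 2 * T 2 r + T 3 r) with (0 * T 0 r + 1 * T 1 r + 2 * T 2 r + 1 * T 3 r) by ring. rewrite <- (lin4 r 0 1 2 1) by auto. apply Series_ext. intro n; unfold d; simpl; ring. }
    rewrite (Series_incr_1 _ Hd) in H0. unfold d in H0 at 1. simpl in H0. lra. }
  destruct (T_closed r Hr) as [_ [e1 [e2 e3]]].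
  rewrite H0, e1, e2, e3 in H.
  assert (e : Nc r = r * (1 / (1 - r) ^ 2 + 2 * ((1 + r) / (1 - r) ^ 3) + (1 + 4 * r + r ^ 2) / (1 - r) ^ 4 - 4)).
  { unfold Nc. field. lra. }
  rewrite e. apply Rmult_le_compat_l; lra.
Qed.

Lemma Series_incr_2 (x : nat -> R) : ex_series (fun n => x (S (S n))) ->
  Series x = x 0%nat + x 1%nat + Series (fun n => x (S (S n))).
Proof.
  intro H. assert (H1 : ex_series (fun n => x (S n))) by (apply (ex_series_incr_1 (fun n => x (S n))); auto).
  assert (H0 : ex_series x) by (apply (ex_series_incr_1 x); auto).
  rewrite (Series_incr_1 _ H0), (Series_incr_1 _ H1). ring.
Qed.

Definition e (n : nat) : R := match n with 0 => 0 | 1 => 1 | 2 => 0 | _ => - INR n end.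
Definition ext (n : nat) : C := RtoC (e n).

Lemma ext_inF : inF ext.
Proof.
  unfold inF, ext. split; [|split; [|split]]; auto.
  intros n Hn. destruct n as [|[|[|n]]]; try lia. unfold e. rewrite Cmod_R, Rabs_Ropp, Rabs_pos_eq. lra. apply pos_INR.
Qed.

Lemma fder1_ext s : 0 <= s < 1 -> fder1 ext (RtoC s) = RtoC (Dc s).
Proof.
  intros Hs. unfold fder1.
  rewrite (csum_ext _ (fun n => RtoC (INR (n+1) * (e (n+1)%nat * s^n)))).
  2:{ intro n. unfold ext. rewrite cpow_R, !RtoC_mult. reflexivity. }
  rewrite csum_real. f_equal.
  set (c := fun n => (INR n + 1)^2 * s^n).
  assert (Hc : ex_series c) by (apply ex_pw; auto).
  assert (Hc2 : ex_series (fun n => c (S (S n)))) by (apply (exR_S (fun n => c (S n))), exR_S; auto).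
  assert (et : forall n, INR (S (S n) + 1) * (e (S (S n) + 1)%nat * s ^ S (S n)) = (-1) * c (S (S n))).
  { intro n. unfold c. replace (S (S n) + 1)%nat with (S (S (S n))) by lia. unfold e.
    rewrite !S_INR. ring. }
  rewrite Series_incr_2.
  2:{ refine (ex_series_ext _ _ (fun n => eq_sym (et n)) _). apply exR_scal; auto. }
  rewrite (Series_ext _ _ et), Series_scal_l.
  assert (Series (fun n => c (S (S n))) = T 2 s - 1 - 4 * s).
  { change (T 2 s) with (Series c). rewrite (Series_incr_2 _ Hc2). unfold c. simpl. ring. }
  rewrite H. destruct (T_closed s Hs) as [_ [_ [e2 _]]]. rewrite e2. unfold Dc. simpl. ring.
Qed.

Lemma zf2_ext s : 0 <= s < 1 -> Cmult (RtoC s) (fder2 ext (RtoC s)) = RtoC (- Nc s).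
Proof.
  intros Hs. unfold fder2.
  rewrite (csum_ext _ (fun n => RtoC (INR ((n + 2) * (n + 1)) * (e (n+2)%nat * s^n)))).
  2:{ intro n. unfold ext. rewrite cpow_R, !RtoC_mult. reflexivity. }
  rewrite csum_real, <- RtoC_mult. f_equal.
  set (d := fun n => (INR n + 2) * (INR n + 1) * (INR n + 2) * s^n).
  assert (Hd : ex_series d).
  { refine (ex_series_ext (fun n => 0 * ((INR n + 1)^0 * s^n) + 1 * ((INR n + 1)^1 * s^n)
                 + 2 * ((INR n + 1)^2 * s^n) + 1 * ((INR n + 1)^3 * s^n)) _ _ _).
    intro n; unfold d; simpl; ring.
    repeat apply exR_plus; apply exR_scal; apply ex_pw; auto. }
  assert (Hd1 : ex_series (fun n => d (S n))) by (apply exR_S; auto).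
  assert (et : forall n, INR ((S n + 2) * (S n + 1)) * (e (S n + 2)%nat * s ^ S n) = (-1) * d (S n)).
  { intro n. unfold d. replace (S n + 2)%nat with (S (S (S n))) by lia. unfold e.
    rewrite mult_INR, !plus_INR, !S_INR. simpl pow. change (INR 0) with 0. ring. }
  assert (Hx : ex_series (fun n => INR ((n + 2) * (n + 1)) * (e (n+2)%nat * s^n))).
  { apply (ex_series_incr_1 (fun n => INR ((n + 2) * (n + 1)) * (e (n+2)%nat * s^n))).
    refine (ex_series_ext _ _ (fun n => eq_sym (et n)) _). apply exR_scal; auto. }
  rewrite (Series_incr_1 _ Hx), (Series_ext _ _ et), Series_scal_l.
  assert (Series (fun n => d (S n)) = T 1 s + 2 * T 2 s + T 3 s - 4).
  { assert (Series d = T 1 s + 2 * T 2 s + T 3 s).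
    { replace (T 1 s + 2 * T 2 s + T 3 s) with (0 * T 0 s + 1 * T 1 s + 2 * T 2 s + 1 * T 3 s) by ring. rewrite <- (lin4 s 0 1 2 1) by auto. apply Series_ext. intro n; unfold d; simpl; ring. }
    rewrite (Series_incr_1 _ Hd) in H. unfold d in H at 1. simpl in H. lra. }
  rewrite H. destruct (T_closed s Hs) as [_ [e1 [e2 e3]]]. rewrite e1, e2, e3. unfold Nc. simpl. field. lra.
Qed.


Definition Pf (al s : R) := 2 * (1 - al + 2 * (2 - al) * s) * (1 - s) ^ 4 - (1 - al + 4 * s + (1 + al) * s ^ 2).

Lemma Pdec al s t : 0 <= al < 1 -> 0 <= s -> s < t -> t <= 1 -> Pf al t < Pf al s.
Proof. intros.
destruct (MVT_cor2 (Pf al) (fun x => 2*2*(2-al)*(1-x)^4 - 8*(1 - al + 2 * (2 - al) * x)*(1-x)^3 - 4 - 2*(1+al)*x) s t) as [c [Hc1 Hc2]]; auto.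
- intros c _. apply is_derive_Reals. unfold Pf. auto_derive; auto. ring.
- assert (hb: 0 <= (1-c)^3) by (apply pow_le; lra).
  assert (hb1: (1-c)^3 <= 1) by (rewrite <- (pow1 3); apply pow_incr; lra).
  assert (2*2*(2-al)*(1-c)^4 - 8*(1 - al + 2 * (2 - al) * c)*(1-c)^3 - 4 - 2*(1+al)*c < 0).
  { assert (e: 2*2*(2-al)*(1-c)^4 - 8*(1 - al + 2 * (2 - al) * c)*(1-c)^3 - 4 - 2*(1+al)*c = 2*(1-c)^3*(2*al - (20-10*al)*c) - 4 - 2*(1+al)*c) by (ring_simplify; lra).
    rewrite e. assert (0 <= (1-c)^3 * c * (20-10*al)) by (apply Rmult_le_pos; [apply Rmult_le_pos|]; lra). assert (0 <= al * (1 - (1-c)^3)) by (apply Rmult_le_pos; lra). nra. }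
  nra.
Qed.

Lemma keyP al r : 0 <= r < 1 -> Pf al r = (1 - r)^4 * ((1 - al) * Dc r - Nc r).
Proof. intro. unfold Pf, Dc, Nc. field. lra. Qed.

Lemma Nc_nonneg r : 0 <= r < 1 -> 0 <= Nc r.
Proof.
  intro. unfold Nc. assert (0 < (1-r)^4) by (apply pow_lt; lra).
  assert ((1-r)^4 <= 1) by (rewrite <- (pow1 4); apply pow_incr; lra).
  assert (e : (4 * r + 2 * r ^ 2) / (1 - r) ^ 4 - 4 * r = (4 * r * (1 - (1-r)^4) + 2 * r^2) / (1 - r)^4) by (field; lra).
  rewrite e. apply Rdiv_le_0_compat; auto. nra.
Qed.

Lemma Nc_pos r : 0 < r < 1 -> 0 < Nc r.
Proof.
  intro. unfold Nc. assert (0 < (1-r)^4) by (apply pow_lt; lra).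
  assert ((1-r)^4 <= 1) by (rewrite <- (pow1 4); apply pow_incr; lra).
  assert (e : (4 * r + 2 * r ^ 2) / (1 - r) ^ 4 - 4 * r = (4 * r * (1 - (1-r)^4) + 2 * r^2) / (1 - r)^4) by (field; lra).
  rewrite e. apply Rdiv_lt_0_compat; auto. nra.
Qed.

Lemma good_region al r : 0 <= al < 1 -> 0 <= r < 1 -> 0 <= Pf al r ->
  0 < Dc r /\ Nc r <= (1 - al) * Dc r.
Proof.
  intros Ha Hr HP. rewrite keyP in HP by auto.
  assert (h4 : 0 < (1-r)^4) by (apply pow_lt; lra).
  assert (Nc r <= (1 - al) * Dc r).
  { apply Rmult_le_reg_l with ((1-r)^4); auto. lra. }
  split; auto.
  destruct (Req_dec r 0) as [E|E].
  - subst. unfold Dc. simpl. lra.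
  - assert (0 < Nc r) by (apply Nc_pos; lra). nra.
Qed.

Lemma good_strict al r : 0 <= al < 1 -> 0 <= r < 1 -> 0 < Pf al r -> Nc r < (1 - al) * Dc r.
Proof.
  intros Ha Hr HP. rewrite keyP in HP by auto.
  assert (h4 : 0 < (1-r)^4) by (apply pow_lt; lra).
  apply Rmult_lt_reg_l with ((1-r)^4); auto. lra.
Qed.

Lemma bad_region al r : 0 <= r < 1 -> Pf al r < 0 -> (1 - al) * Dc r < Nc r.
Proof.
  intros Hr HP. rewrite keyP in HP by auto.
  assert (h4 : 0 < (1-r)^4) by (apply pow_lt; lra).
  apply Rmult_lt_reg_l with ((1-r)^4); auto. lra.
Qed.

Lemma Cmod_zf2f1 a z : fder1 a z <> RtoC 0 -> Cmod (zf2f1 a z) = Cmod (Cmult z (fder2 a z)) / Cmod (fder1 a z).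
Proof. intro. unfold zf2f1. apply Cmod_div. auto. Qed.

Lemma main_bound al a z : 0 <= al < 1 -> inF a -> Cmod z < 1 -> 0 <= Pf al (Cmod z) ->
  fder1 a z <> RtoC 0 /\ Cmod (zf2f1 a z) <= 1 - al /\
  (0 < Pf al (Cmod z) -> Cmod (zf2f1 a z) < 1 - al).
Proof.
  intros Hal Ha Hz HP. assert (Hr : 0 <= Cmod z < 1) by (split; [apply Cmod_ge_0|auto]).
  destruct (good_region al _ Hal Hr HP) as [HD HN].
  pose proof (fder1_bound a z Ha Hz). pose proof (fder2_bound a z Ha Hz).
  assert (Hf : fder1 a z <> RtoC 0).
  { intro E. rewrite E, Cmod_0 in H. lra. }
  split; auto. rewrite Cmod_zf2f1 by auto.
  assert (0 < Cmod (fder1 a z)) by lra.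
  split.
  - apply Rmult_le_reg_r with (Cmod (fder1 a z)); auto. unfold Rdiv. rewrite Rmult_assoc, Rinv_l by lra. nra.
  - intro HP'. pose proof (good_strict al _ Hal Hr HP').
    apply Rmult_lt_reg_r with (Cmod (fder1 a z)); auto. unfold Rdiv. rewrite Rmult_assoc, Rinv_l by lra. nra.
Qed.

Lemma Re_1plus w : Re (Cplus (RtoC 1) w) >= 1 - Cmod w.
Proof.
  pose proof (re_le_Cmod w). destruct w as [x y]. simpl. simpl in H. pose proof (Rle_abs (-x)). rewrite Rabs_Ropp in H0. lra.
Qed.

Lemma find_s r0 r : 0 < r0 -> r0 < r -> r < 1 -> 0 < Dc r0 ->
  exists s, r0 < s <= r /\ (Dc s = 0 \/ 0 < Dc s).
Proof.
  intros H0 H1 H2 HD.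
  set (Q := fun s => (2+4*s)*(1-s)^3 - (1+s)).
  assert (HQ : forall s, s < 1 -> Q s = (1-s)^3 * Dc s).
  { intros s Hs. unfold Q, Dc. field. lra. }
  destruct (Rle_lt_dec 0 (Dc r)) as [Hr|Hr].
  { exists r. split. lra. destruct Hr; auto. }
  assert (Qc : continuity Q) by (unfold Q; reg).
  assert (q0 : 0 < Q r0) by (rewrite HQ by lra; apply Rmult_lt_0_compat; auto; apply pow_lt; lra).
  assert (q1 : Q r < 0) by (rewrite HQ by lra; assert (0 < (1-r)^3) by (apply pow_lt; lra); nra).
  destruct (IVT_gen Q r0 r 0 Qc) as [x [Hx Qx]].
  { rewrite Rmin_right, Rmax_left by lra. lra. }
  rewrite Rmin_left, Rmax_right in Hx by lra.
  exists x. assert (x <> r0) by (intro; subst; lra).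
  split. lra. left. rewrite HQ in Qx by lra.
  assert (0 < (1-x)^3) by (apply pow_lt; lra).
  apply Rmult_integral in Qx. destruct Qx; auto. lra.
Qed.

Lemma ext_at s : 0 <= s < 1 -> 0 < Dc s ->
  fder1 ext (RtoC s) = RtoC (Dc s) /\ zf2f1 ext (RtoC s) = RtoC (- Nc s / Dc s).
Proof.
  intros Hs HD. split. apply fder1_ext; auto. rewrite RtoC_div by lra.
  unfold zf2f1. rewrite fder1_ext, zf2_ext; auto.
Qed.


Lemma root_facts al r0 : 0 <= al < 1 -> 0 < r0 < 1 -> r0_eq al r0 ->
  (forall p, 0 <= p <= r0 -> 0 <= Pf al p) /\
  (forall p, 0 <= p < r0 -> 0 < Pf al p) /\
  (forall p, r0 < p <= 1 -> Pf al p < 0) /\ 0 < Dc r0.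
Proof.
  intros Hal Hr Heq. assert (E : Pf al r0 = 0) by (unfold Pf, r0_eq in *; lra).
  assert (A : forall p, 0 <= p < r0 -> 0 < Pf al p).
  { intros p Hp. rewrite <- E. apply Pdec; lra. }
  split; [|split; [auto|split]].
  - intros p Hp. destruct (Req_dec p r0). subst; lra. apply Rlt_le, A. lra.
  - intros p Hp. rewrite <- E. apply Pdec; lra.
  - apply (good_region al r0); lra.
Qed.

Lemma not_in_set al r0 r : 0 <= al < 1 -> 0 < r0 < 1 -> r0_eq al r0 -> r0 < r -> r <= 1 ->
  exists s, 0 < s < r /\ s < 1 /\
   (fder1 ext (RtoC s) = RtoC 0 \/
    (fder1 ext (RtoC s) <> RtoC 0 /\ zf2f1 ext (RtoC s) = RtoC (- Nc s / Dc s) /\ 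
     0 < Dc s /\ (1 - al) * Dc s < Nc s)).
Proof.
  intros Hal Hr0 Heq H1 H2.
  destruct (root_facts al r0 Hal Hr0 Heq) as [_ [_ [Hneg HD]]].
  destruct (find_s r0 ((r0 + r)/2)) as [s [Hs HDs]]; try lra.
  exists s. split. lra. split. lra.
  destruct HDs as [E|E].
  - left. rewrite fder1_ext by lra. rewrite E. auto.
  - right. destruct (ext_at s ltac:(lra) E) as [F W]. rewrite F. split.
    + intro X. apply RtoC_inj in X. lra.
    + split; auto. split; auto. apply bad_region. lra. apply Hneg. lra.
Qed.

Lemma div_gt k N D : 0 < D -> k * D < N -> N / D > k.
Proof. intros. apply Rmult_lt_reg_r with D; auto. unfold Rdiv. rewrite Rmult_assoc, Rinv_l by lra. lra. Qed.

Theorem corollary3p4 (alpha r0 r1 : R)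
  (Halpha : 0 <= alpha < 1)
  (Hr0 : 0 < r0 < 1) (Hr0eq : r0_eq alpha r0)
  (Hr1 : 0 < r1 < 1) (Hr1eq : r0_eq (1 / 2) r1) :
  (forall a, inF a -> forall z : C, Cmod z <= r0 ->
     fder1 a z <> RtoC 0 /\ Cmod (zf2f1 a z) <= 1 - alpha) /\
  (forall r, r0 < r < 1 -> exists a, inF a /\ exists z : C, Cmod z <= r /\
     (fder1 a z = RtoC 0 \/ Cmod (zf2f1 a z) > 1 - alpha)) /\
  is_lub (convex_order_radii alpha) r0 /\
  is_lub unif_convex_radii r1 /\
  1254285 / 10000000 <= r1 < 1254295 / 10000000.
Proof.
  destruct (root_facts alpha r0 Halpha Hr0 Hr0eq) as [Pge [Pgt [Pneg HD0]]].
  assert (Hh : 0 <= 1/2 < 1) by lra.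
  destruct (root_facts (1/2) r1 Hh Hr1 Hr1eq) as [Pge1 [Pgt1 [Pneg1 HD1]]].
  split; [|split; [|split; [|split]]].
  - intros a Ha z Hz. assert (0 <= Cmod z) by apply Cmod_ge_0.
    destruct (main_bound alpha a z Halpha Ha ltac:(lra) (Pge (Cmod z) ltac:(lra))) as [A [B _]]. auto.
  - intros r Hr.
    destruct (find_s r0 r) as [s [Hs HDs]]; try lra.
    exists ext. split. apply ext_inF. exists (RtoC s). rewrite Cmod_R, Rabs_pos_eq by lra. split. lra.
    destruct HDs as [E|E].
    + left. rewrite fder1_ext by lra. rewrite E. auto.
    + right. destruct (ext_at s ltac:(lra) E) as [F W]. rewrite W, Cmod_R.
      assert (Hb := bad_region alpha s ltac:(lra) (Pneg s ltac:(lra))).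
      rewrite Rabs_left1.
      * apply Rmult_lt_reg_r with (Dc s); auto. unfold Rdiv. rewrite Ropp_mult_distr_l, Ropp_involutive, Rmult_assoc, Rinv_l by lra. lra.
      * assert (0 <= Nc s / Dc s) by (apply Rdiv_le_0_compat; [apply Nc_nonneg; lra | auto]).
        unfold Rdiv in *. lra.
  - split.
    + intros r [[Hra Hrb] Hall]. destruct (Rle_lt_dec r r0) as [|Hlt]; auto. exfalso.
      destruct (not_in_set alpha r0 r Halpha Hr0 Hr0eq Hlt Hrb) as [s [Hs [Hs1 C]]].
      destruct (Hall ext ext_inF (RtoC s)) as [F R].
      { rewrite Cmod_R, Rabs_pos_eq; lra. }
      destruct C as [C|[C [W [D N]]]]. auto.
      rewrite W in R. simpl in R.
      assert (Nc s / Dc s > 1 - alpha).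
      { apply div_gt; auto. }
      unfold Rdiv in *. rewrite Ropp_mult_distr_l_reverse in R. lra.
    + intros b Hb. apply Hb. split. lra.
      intros a Ha z Hz. assert (0 <= Cmod z) by apply Cmod_ge_0.
      destruct (main_bound alpha a z Halpha Ha ltac:(lra) (Pge (Cmod z) ltac:(lra))) as [A [B Cc]].
      split; auto. pose proof (Cc (Pgt (Cmod z) ltac:(lra))). pose proof (Re_1plus (zf2f1 a z)). lra.
  - split.
    + intros r [[Hra Hrb] Hall]. destruct (Rle_lt_dec r r1) as [|Hlt]; auto. exfalso.
      destruct (not_in_set (1/2) r1 r Hh Hr1 Hr1eq Hlt Hrb) as [s [Hs [Hs1 C]]].
      destruct (Hall ext ext_inF (RtoC s)) as [F R].
      { rewrite Cmod_R, Rabs_pos_eq; lra. }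
      destruct C as [C|[C [W [D N]]]]. auto.
      rewrite W, Cmod_R in R. simpl in R.
      assert (Nc s / Dc s > 1/2).
      { apply div_gt; auto; lra. }
      rewrite Rabs_left1 in R.
      * unfold Rdiv in *. rewrite Ropp_mult_distr_l_reverse in R. lra.
      * lra.
    + intros b Hb. apply Hb. split. lra.
      intros a Ha z Hz. assert (0 <= Cmod z) by apply Cmod_ge_0.
      destruct (main_bound (1/2) a z Hh Ha ltac:(lra) (Pge1 (Cmod z) ltac:(lra))) as [A [B Cc]].
      split; auto. pose proof (Cc (Pgt1 (Cmod z) ltac:(lra))). pose proof (Re_1plus (zf2f1 a z)). lra.
  - assert (Plo : 0 < Pf (1/2) (1254285 / 10000000)) by (unfold Pf; lra).
    assert (Phi : Pf (1/2) (1254295 / 10000000) < 0) by (unfold Pf; lra).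
    assert (E : Pf (1/2) r1 = 0) by (unfold Pf, r0_eq in *; lra).
    split.
    + destruct (Rle_lt_dec (1254285 / 10000000) r1) as [|H]; auto.
      pose proof (Pdec (1/2) r1 (1254285 / 10000000) Hh ltac:(lra) H ltac:(lra)). lra.
    + destruct (Rlt_le_dec r1 (1254295 / 10000000)) as [|H]; auto.
      destruct (Req_dec r1 (1254295 / 10000000)) as [X|X]. rewrite X in E; lra.
      pose proof (Pdec (1/2) (1254295 / 10000000) r1 Hh ltac:(lra) ltac:(lra) ltac:(lra)). lra.
Qed.
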